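(* Let $m\geq 2$ and let $f=a_0+a_1z+\cdots+a_mz^m\in\mathbb{Z}[z]$ be a primitive polynomial with $a_0a_m\neq 0$. Let $b$ be a positive divisor of $a_m$ and $\delta$ a real number with $1/b\leq\delta\leq 1$, and suppose there is an index $j$ with $0\leq j\leq m-1$ such that $$|a_j|>\sum_{0\leq i<j}|a_i||a_m|^{j-i}+\sum_{j<i\leq m}|a_i|\delta^{i-j},$$ where an empty sum is $0$. Then $f$ is a product of at most $m-j$ irreducible polynomials in $\mathbb{Z}[z]$. In particular, if $j=m-1$, then $f$ is irreducible in $\mathbb{Z}[z]$.
   Context: A polynomial in $\mathbb{Z}[z]$ is primitive if the greatest common divisor of its coefficients is $1$. ''$f$ is a product of at most $r$ irreducible polynomials'' means that in a factorization of $f$ into irreducible elements of $\mathbb{Z}[z]$, the number of factors (counted with multiplicity) is at most $r$. *)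

(* Defs.v *)
From HB Require Import structures.
From mathcomp Require Import all_boot all_order all_algebra.
From mathcomp Require Import reals.
Set Implicit Arguments. Unset Strict Implicit. Unset Printing Implicit Defensive.
Import Order.TTheory GRing.Theory Num.Theory.
Local Open Scope ring_scope.

Definition primitive_intpoly (p : {poly int}) : bool :=
  (\big[gcdn/0%N]_(i < size p) absz (p`_i)%R == 1)%N.

Definition irreducible_elt (D : idomainType) (p : D) : Prop :=
  p != 0 /\ p \isn't a GRing.unit /\
  forall q r : D, p = q * r -> q \is a GRing.unit \/ r \is a GRing.unit.

Definition prod_at_most_irr (D : idomainType) (r : nat) (p : D) : Prop :=
  exists (u : D) (s : seq D),
    [/\ u \is a GRing.unit, (size s <= r)%N,
        (forall q, q \in s -> irreducible_elt q) &
        p = u * \prod_(q <- s) q].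

(* Main.v *)
Require Import Defs.
From HB Require Import structures.
From mathcomp Require Import all_boot all_order all_algebra.
From mathcomp Require Import reals.
From mathcomp Require Import all_field zify ring.
From Stdlib Require Import Classical.
Import Order.TTheory GRing.Theory Num.Theory.
Local Open Scope ring_scope.
Lemma le_mid (y x z : algC) : x <= y -> y <= z -> x <= z.
Proof. exact: le_trans. Qed.

Lemma sum_split (F : nat -> algC) (n j : nat) : (j < n)%N ->
  \sum_(i < n) F i = \sum_(0 <= i < j) F i + F j + \sum_(j.+1 <= i < n) F i.
Proof.
move=> jn; rewrite -(big_mkord (fun _ => true)) (@big_cat_nat _ _ _ j 0 n _ _ (leq0n j) (ltnW jn)) /=.
by rewrite (@big_ltn _ _ _ j n _ jn) addrA.
Qed.

Lemma sum_ext (w : nat -> algC) (a n m : nat) :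
  (forall i, 0 <= w i) -> (forall i, (m < i)%N -> w i = 0) ->
  \sum_(a <= i < n) w i <= \sum_(a <= i < m.+1) w i.
Proof.
move=> w0 wz.
case: (leqP n m.+1) => hn.
  case: (leqP a n) => ha.
    rewrite (@big_cat_nat _ _ _ n a m.+1 _ _ ha hn) /= lerDl; exact: sumr_ge0.
  rewrite big_geq; [exact: sumr_ge0| exact: ltnW].
case: (leqP a m.+1) => ha.
  rewrite (@big_cat_nat _ _ _ m.+1 a n _ _ ha (ltnW hn)) /= [X in _ + X <= _]big1_seq ?addr0 // => i.
  by move=> /andP[_]; rewrite mem_index_iota => /andP[hi _]; apply: wz.
rewrite big1_seq; first exact: sumr_ge0.
move=> i /andP[_]; rewrite mem_index_iota => /andP[hi _]; apply: wz.
lia.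
Qed.

Lemma geo_bound (q : algC) n : 0 <= q -> q < 1 ->
  \sum_(i < n) q ^+ i <= (1 - q)^-1.
Proof.
move=> q0 q1.
have h1 : 0 < 1 - q by rewrite subr_gt0.
have -> : \sum_(i < n) q ^+ i = (1 - q)^-1 * (1 - q ^+ n).
  apply: (mulfI (lt0r_neq0 h1)); rewrite mulrA mulfV ?lt0r_neq0 // mul1r.
  by rewrite -[1 - q]opprB mulNr -subrX1 opprB.
rewrite -[leRHS]mulr1; apply: ler_wpM2l; first by rewrite invr_ge0 ltW.
by rewrite gerBl exprn_ge0.
Qed.

Lemma argmax_ex (f : nat -> algC) N : (forall n, 0 <= f n) -> (0 < N)%N ->
  exists k, (k < N)%N /\ forall n, (n < N)%N -> f n <= f k.
Proof.
move=> f0; elim: N => // [[|N] IH] _.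
  by exists 0%N; split => // n; rewrite ltnS leqn0 => /eqP ->.
have [k [kN hk]] := IH isT.
case/orP: (real_leVge (ger0_real (f0 N.+1)) (ger0_real (f0 k))) => h.
  exists k; split; first by apply: ltnW.
  move=> n; rewrite ltnS leq_eqVlt => /orP[/eqP ->|]; [exact: h| exact: hk].
exists N.+1; split => // n; rewrite ltnS leq_eqVlt => /orP[/eqP ->|hn] //.
exact: le_trans (hk _ hn) h.
Qed.

Lemma bernoulli (th : algC) n : 0 <= th -> 1 + n%:R * th <= (1 + th) ^+ n.
Proof.
move=> th0; elim: n => [|n IH]; first by rewrite mul0r addr0 expr0.
rewrite exprS -natr1 mulrDl mul1r.
have h : 0 <= n%:R * th by rewrite mulr_ge0.
apply: le_trans (_ : (1 + th) * (1 + n%:R * th) <= _); last first.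
  by rewrite ler_wpM2l // addr_ge0.
rewrite mulrDl mul1r mulrDr mulr1 -addrA lerD2l.
by rewrite lerD2l lerDl mulr_ge0.
Qed.

Lemma decay (K lam : algC) : 0 < lam -> lam < 1 -> 0 <= K ->
  exists n0, K * lam ^+ n0 < 1.
Proof.
move=> l0 l1 K0.
set th := lam^-1 - 1.
have th0 : 0 < th by rewrite subr_gt0 invf_gt1.
exists (Num.bound (K / th)).
have hb := archi_boundP (divr_ge0 K0 (ltW th0)).
have hl : lam^-1 = 1 + th by rewrite /th addrC subrK.
have : K < (lam^-1) ^+ (Num.bound (K / th)).
  rewrite hl; apply: (lt_le_trans _ (bernoulli th (Num.bound (K / th)) (ltW th0))).
  rewrite ltr_pdivrMr // in hb; apply: lt_trans hb _; rewrite addrC ltrDl ltr01 //.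
rewrite exprVn => h.
have lp : 0 < lam ^+ (Num.bound (K / th)) by rewrite exprn_gt0.
by move: h; rewrite -(ltr_pM2r lp) mulVf ?lt0r_neq0.
Qed.
Definition yv (z : algC) : {poly algC} := (z^-1)%:P * 'X.
Definition G (N : nat) (z : algC) : {poly algC} := \sum_(k < N) (yv z) ^+ k.

Lemma coefG N z n : (G N z)`_n = if (n < N)%N then z^-1 ^+ n else 0.
Proof.
have -> : G N z = \poly_(k < N) (z^-1 ^+ k).
  rewrite poly_def /G; apply: eq_bigr => k _.
  by rewrite /yv exprMn -polyC_exp mul_polyC.
by rewrite coef_poly.
Qed.

Lemma G_id N z : (1 - yv z) * G N z = 1 - (yv z) ^+ N.
Proof. by rewrite /G -[1 - yv z]opprB mulNr -subrX1 opprB. Qed.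

Lemma XsubC_y z : z != 0 -> 'X - z%:P = (-z)%:P * (1 - yv z).
Proof.
move=> z0; rewrite /yv mulrBr mulr1 mulrA -polyCM mulNr mulfV // polyCN.
by rewrite polyCN polyC1 mulN1r opprK addrC.
Qed.

Lemma aux_id (a b C : algC) (Y : {poly algC}) N :
  a%:P * (1 - b%:P * 'X^N) * (C%:P + 'X^N * Y) =
  (a * C)%:P + 'X^N * (a%:P * Y - a%:P * b%:P * C%:P - a%:P * b%:P * 'X^N * Y).
Proof. rewrite polyCM; ring. Qed.

Lemma prod_form N (t : seq algC) : (forall z, z \in t -> z != 0) ->
  exists C Y, (\prod_(z <- t) ('X - z%:P)) * \prod_(z <- t) G N z
              = C%:P + 'X^N * Y.
Proof.
elim: t => [|z t IH] ht.
  by exists 1, 0; rewrite !big_nil mulr1 mulr0 addr0.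
have [C [Y e]] : exists C Y, (\prod_(z <- t) ('X - z%:P)) * \prod_(z <- t) G N z
              = C%:P + 'X^N * Y.
  by apply: IH => w wt; apply: ht; rewrite inE wt orbT.
have z0 : z != 0 by apply: ht; rewrite inE eqxx.
exists (-z * C), ((-z)%:P * Y - (-z)%:P * (z^-1 ^+ N)%:P * C%:P
                   - (-z)%:P * (z^-1 ^+ N)%:P * 'X^N * Y).
rewrite !big_cons (XsubC_y z z0).
have -> : (-z)%:P * (1 - yv z) * \prod_(j <- t) ('X - j%:P) * (G N z * \prod_(j <- t) G N j)
   = (-z)%:P * ((1 - yv z) * G N z) * (\prod_(j <- t) ('X - j%:P) * \prod_(j <- t) G N j).
  ring.
rewrite G_id e.
have -> : (yv z) ^+ N = (z^-1 ^+ N)%:P * 'X^N by rewrite /yv exprMn -polyC_exp.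
exact: aux_id.
Qed.

Lemma coef_bound N (t : seq algC) rho mu lam :
  0 < rho -> 0 <= mu -> mu < lam ->
  (forall z, z \in t -> `|z^-1| * rho <= mu) ->
  forall n, `|(\prod_(z <- t) G N z)`_n| * rho ^+ n
            <= ((1 - mu / lam)^-1) ^+ (size t) * lam ^+ n.
Proof.
move=> r0 m0 ml; have l0 : 0 < lam by apply: le_lt_trans ml.
set c := (1 - mu / lam)^-1.
have q0 : 0 <= mu / lam by rewrite divr_ge0 // ltW.
have q1 : mu / lam < 1 by rewrite ltr_pdivrMr // mul1r.
have c0 : 0 <= c by rewrite invr_ge0 subr_ge0 ltW.
elim: t => [|z t IH] ht n.
  rewrite big_nil coef1 expr0 mul1r; case: n => [|n].
    by rewrite expr0 normr1 mulr1.
  by rewrite normr0 mul0r exprn_ge0 // ltW.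
have hz : `|z^-1| * rho <= mu by apply: ht; rewrite inE eqxx.
have IH' : forall n, `|(\prod_(j <- t) G N j)`_n| * rho ^+ n <= c ^+ size t * lam ^+ n.
  by apply: IH => w wt; apply: ht; rewrite inE wt orbT.
rewrite big_cons coefM /=.
apply: le_trans (_ : \sum_(i < n.+1) (mu ^+ i * (c ^+ size t * lam ^+ (n - i))) <= _).
  apply: le_trans (_ : \sum_(i < n.+1) `|(G N z)`_i * (\prod_(j <- t) G N j)`_(n - i)| * rho ^+ n <= _).
    rewrite -mulr_suml; apply: ler_wpM2r; first by rewrite exprn_ge0 ?ltW.
    exact: ler_norm_sum.
  apply: ler_sum => i _.
  have hi : (i <= n)%N by rewrite -ltnS.
  have e : rho ^+ n = rho ^+ i * rho ^+ (n - i) by rewrite -exprD subnKC.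
  rewrite normrM e mulrACA.
  have r0' := ltW r0.
  apply: ler_pM; [exact: mulr_ge0 (normr_ge0 _) (exprn_ge0 _ r0')|
    exact: mulr_ge0 (normr_ge0 _) (exprn_ge0 _ r0')| |exact: IH'].
  rewrite coefG; case: ifP => _; last by rewrite normr0 mul0r exprn_ge0.
  have h0 : 0 <= `|z^-1| * rho by exact: mulr_ge0 (normr_ge0 _) r0'.
  by rewrite normrX -exprMn; apply: lerXn2r; rewrite ?nnegrE // (le_trans h0 hz).
apply: (le_mid (c ^+ size t * lam ^+ n * \sum_(i < n.+1) (mu / lam) ^+ i)).
  rewrite mulr_sumr; apply: ler_sum => i _.
  have hi : (i <= n)%N by rewrite -ltnS.
  rewrite mulrCA -mulrA; apply: ler_wpM2l; first by rewrite exprn_ge0.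
  have e : lam ^+ n = lam ^+ (n - i) * lam ^+ i by rewrite -exprD subnK.
  have ln : lam ^+ i != 0 by rewrite expf_neq0 // lt0r_neq0.
  rewrite e exprMn exprVn.
  have -> : lam ^+ (n - i) * lam ^+ i * (mu ^+ i / lam ^+ i) = mu ^+ i * lam ^+ (n - i).
    by rewrite mulrAC -mulrA mulfVK // mulrC.
  by [].
have -> : c ^+ (size (z :: t)) * lam ^+ n = c ^+ size t * lam ^+ n * c.
  by rewrite /= exprS; ring.
apply: ler_wpM2l.
  exact: mulr_ge0 (exprn_ge0 _ c0) (exprn_ge0 _ (ltW l0)).
exact: geo_bound.
Qed.
Lemma arith1 (a b m j : nat) : (a + b <= m.+1)%N -> (m - j < b)%N -> (a <= j)%N.
Proof. lia. Qed.

Lemma mu_ex (t : seq algC) (v : algC -> algC) :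
  (forall z, z \in t -> 0 <= v z /\ v z < 1) ->
  exists mu, [/\ 0 <= mu, mu < 1 & forall z, z \in t -> v z <= mu].
Proof.
elim: t => [|z t IH] ht; first by exists 0; split => //; rewrite ltr01.
have [mu [m0 m1 hm]] : exists mu, [/\ 0 <= mu, mu < 1 & forall z, z \in t -> v z <= mu].
  by apply: IH => w wt; apply: ht; rewrite inE wt orbT.
have [v0 v1] := ht z (mem_head _ _).
case/orP: (real_leVge (ger0_real v0) (ger0_real m0)) => h.
  exists mu; split => // w; rewrite inE => /orP[/eqP -> //|]; exact: hm.
exists (v z); split => // w; rewrite inE => /orP[/eqP -> //|wt].
exact: le_trans (hm _ wt) h.
Qed.

Lemma key (F : {poly algC}) (rho : algC) (m j : nat) (t : seq algC) :
  0 < rho -> (size F <= m.+1)%N -> F != 0 ->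
  \sum_(0 <= i < j) `|F`_i| * rho ^+ i + \sum_(j.+1 <= i < m.+1) `|F`_i| * rho ^+ i
    < `|F`_j| * rho ^+ j ->
  (forall z, z \in t -> rho < `|z|) ->
  \prod_(z <- t) ('X - z%:P) %| F ->
  (size t <= m - j)%N.
Proof.
move=> r0 sF F0 dom ht dQ.
set Q := \prod_(z <- t) ('X - z%:P) in dQ.
set P := F %/ Q.
have eF : F = P * Q by rewrite divpK.
have P0 : P != 0 by apply: contraNneq F0 => e; rewrite eF e mul0r.
have Q0 : Q != 0 by apply: monic_neq0; apply: monic_prod_XsubC.
have sz : size F = (size P + size t)%N.
  by rewrite eF size_mul // size_prod_XsubC addnS.
case: (leqP (size t) (m - j)) => // hlt.
have hP : (size P <= j)%N by apply: (arith1 (size P) (size t) m j) => //; rewrite -sz.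
have r0' := ltW r0.
have zne0 : forall z, z \in t -> z != 0.
  move=> z zt; apply: contraTneq (ht z zt) => ->; rewrite normr0; apply/negP => h.
  by move: (lt_trans r0 h); rewrite ltxx.
have [mu [m0 m1 hm]] : exists mu, [/\ 0 <= mu, mu < 1 &
    forall z, z \in t -> `|z^-1| * rho <= mu].
  apply: mu_ex => z zt; split; first exact: mulr_ge0 (normr_ge0 _) r0'.
  have z0 := zne0 z zt.
  rewrite normfV mulrC ltr_pdivrMr ?normr_gt0 // mul1r; exact: ht.
set lam := (mu + 1) / 2.
have [ml l1] := midf_lt m1.
have l0 : 0 < lam by exact: le_lt_trans m0 ml.
set c := (1 - mu / lam)^-1.
have c0 : 0 <= c.
  rewrite invr_ge0 subr_ge0 ler_pdivrMr // mul1r; exact: ltW.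
set K := c ^+ size t.
have K0 : 0 <= K by rewrite exprn_ge0.
have [n0 hn0] := decay _ _ l0 l1 K0.
set N := (n0 + j).+1.
set R := \prod_(z <- t) G N z.
pose u n := `|R`_n| * rho ^+ n.
have u0 : forall n, 0 <= u n by move=> n; exact: mulr_ge0 (normr_ge0 _) (exprn_ge0 _ r0').
have ub : forall n, u n <= K * lam ^+ n.
  by move=> n; apply: coef_bound.
have [k [kN hk]] := argmax_ex u N u0 (ltn0Sn (n0 + j)).
have uone : u 0%N = 1.
  rewrite /u /R coef0_prod big1_seq ?normr1 ?expr0 ?mulr1 // => z _.
  by rewrite coefG expr0.
have uk1 : 1 <= u k by rewrite -uone; apply: hk.
have kn0 : (k < n0)%N.
  rewrite ltnNge; apply/negP => h.
  have : K * lam ^+ k < 1.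
    apply: le_lt_trans hn0; apply: ler_wpM2l => //.
    by apply: ler_wiXn2l => //; [exact: ltW | exact: ltW].
  by move=> h'; move: (le_lt_trans (le_trans uk1 (ub k)) h'); rewrite ltxx.
set n := (k + j)%N.
have nN : (n < N)%N by rewrite /n /N ltnS leq_add2r ltnW.
pose T i := F`_i * R`_(n - i).
have cz : (F * R)`_n = 0.
  have [C [Y e]] := prod_form N t zne0.
  rewrite eF -mulrA e mulrDr coefD coefMC (nth_default _ (leq_trans hP _)); last first.
    by rewrite /n leq_addl.
  by rewrite mul0r add0r mulrCA coefXnM nN.
have E : \sum_(0 <= i < j) T i + T j + \sum_(j.+1 <= i < n.+1) T i = 0.
  rewrite -sum_split; first by rewrite coefM in cz; exact: cz.
  by rewrite ltnS /n leq_addl.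
have Tj : T j = - (\sum_(0 <= i < j) T i + \sum_(j.+1 <= i < n.+1) T i).
  by apply/eqP; rewrite -subr_eq0 opprK -[X in _ == X]E; apply/eqP; ring.
have hT : forall i, (i <= n)%N -> `|T i| * rho ^+ n <= u k * (`|F`_i| * rho ^+ i).
  move=> i hi.
  have e : rho ^+ n = rho ^+ i * rho ^+ (n - i) by rewrite -exprD subnKC.
  rewrite /T normrM e mulrACA mulrC; apply: ler_wpM2r.
    exact: mulr_ge0 (normr_ge0 _) (exprn_ge0 _ r0').
  apply: hk; exact: leq_ltn_trans (leq_subr i n) nN.
pose w i := `|F`_i| * rho ^+ i.
have w0 : forall i, 0 <= w i by move=> i; exact: mulr_ge0 (normr_ge0 _) (exprn_ge0 _ r0').
have wz : forall i, (m < i)%N -> w i = 0.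
  by move=> i hi; rewrite /w nth_default ?normr0 ?mul0r //; exact: leq_trans sF hi.
have H1 : `|T j| * rho ^+ n <=
    u k * (\sum_(0 <= i < j) w i + \sum_(j.+1 <= i < n.+1) w i).
  rewrite Tj normrN; apply: le_trans (_ : (\sum_(0 <= i < j) `|T i| + \sum_(j.+1 <= i < n.+1) `|T i|) * rho ^+ n <= _).
    apply: ler_wpM2r; first exact: exprn_ge0.
    apply: le_trans (ler_normD _ _) _; apply: lerD; exact: ler_norm_sum.
  rewrite mulrDl mulrDr !mulr_suml !mulr_sumr; apply: lerD.
    apply: ler_sum_nat => i /andP[_ hi]; apply: hT; exact: leq_trans (ltnW hi) (leq_addl _ _).
  by apply: ler_sum_nat => i /andP[_ hi]; apply: hT; rewrite -ltnS.
have H2 : `|T j| * rho ^+ n = u k * w j.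
  have e : rho ^+ n = rho ^+ j * rho ^+ k by rewrite -exprD /n addnC.
  by rewrite /T /n addnK normrM e mulrACA mulrC.
have H3 : \sum_(j.+1 <= i < n.+1) w i <= \sum_(j.+1 <= i < m.+1) w i by exact: sum_ext.
have uk0 : 0 < u k by exact: lt_le_trans ltr01 uk1.
have : u k * w j < u k * w j.
  rewrite -{1}H2; apply: le_lt_trans H1 _; rewrite ltr_pM2l //.
  by apply: le_lt_trans dom; rewrite lerD2l.
by rewrite ltxx.
Qed.
Lemma ar2 (i j m : nat) : (i < j)%N -> (j <= m)%N -> (j - i + (m - j) = m - i)%N.
Proof. lia. Qed.
Lemma ar3 (i j m : nat) : (j < i)%N -> (i <= m)%N -> (i - j + (m - i) = m - j)%N.
Proof. lia. Qed.

Lemma int_dom (R : realType) (f : {poly int}) (b : nat) (delta : R) (j m : nat) :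
  f`_m != 0 -> (0 < b)%N -> (b%:Z %| f`_m)%Z -> 1 / b%:R <= delta -> (j < m)%N ->
  (\sum_(0 <= i < j) (`|f`_i| * `|f`_m| ^+ (j - i))%:~R
     + \sum_(j.+1 <= i < m.+1) (`|f`_i|)%:~R * delta ^+ (i - j) < (`|f`_j|)%:~R :> R) ->
  \sum_(0 <= i < j) `|f`_i| * `|f`_m| ^+ (m - i)
    + \sum_(j.+1 <= i < m.+1) `|f`_i| * `|f`_m| ^+ (m - i)
    < `|f`_j| * `|f`_m| ^+ (m - j).
Proof.
move=> am0 b0 bd hdel jm H.
set A : R := (`|f`_m|)%:~R.
have bA : (b%:R : R) <= A.
  rewrite /A -natr_absz ler_nat; apply: dvdn_leq; first by rewrite absz_gt0.
  exact: bd.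
have bpos : (0 : R) < b%:R by rewrite ltr0n.
have d0 : 0 <= delta by apply: le_trans hdel; rewrite divr_ge0 // ltW.
have dA : 1 <= delta * A.
  rewrite ler_pdivrMr // in hdel; apply: le_trans hdel _.
  exact: ler_wpM2l.
have A0 : 0 < A by exact: lt_le_trans bpos bA.
rewrite -(ltr_int R) rmorphD /= !rmorph_sum /= intrM rmorphXn /= -/A.
rewrite -(ltr_pM2r (exprn_gt0 (m - j) A0)) in H.
apply: le_lt_trans H; rewrite mulrDl !mulr_suml; apply: lerD.
  apply: ler_sum_nat => i /andP[_ hi].
  rewrite !intrM !rmorphXn /= -/A -mulrA -exprD ar2 //; exact: ltnW.
apply: ler_sum_nat => i /andP[hi1 hi2].
rewrite intrM rmorphXn /= -/A -mulrA; apply: ler_wpM2l.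
  by rewrite ler0z normr_ge0.
rewrite -(ar3 i j m hi1 hi2) // exprD mulrA -exprMn mulrC [delta * A]mulrC.
by apply: ler_peMr; [exact: exprn_ge0 (ltW A0) | apply: exprn_ege1; rewrite mulrC].
Qed.

Lemma term_eq (x am : int) (i m : nat) : am != 0 -> (i <= m)%N ->
  ((x * `|am| ^+ (m - i))%:~R : algC) * ((`|am|%:~R)^-1) ^+ m
  = x%:~R * ((`|am|%:~R)^-1) ^+ i.
Proof.
move=> a0 im; rewrite intrM rmorphXn /=.
set A : algC := (`|am|)%:~R.
have A0 : A != 0 by rewrite /A intr_eq0 normr_eq0.
have -> : A^-1 ^+ m = A^-1 ^+ (m - i) * A^-1 ^+ i by rewrite -exprD subnK.
by rewrite mulrA -[x%:~R * _ * _]mulrA -exprMn mulfV // expr1n mulr1.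
Qed.

Notation toC p := (map_poly (intr : int -> algC) p).

Lemma alg_dom (f : {poly int}) (j m : nat) : f`_m != 0 -> (j < m)%N ->
  \sum_(0 <= i < j) `|f`_i| * `|f`_m| ^+ (m - i)
    + \sum_(j.+1 <= i < m.+1) `|f`_i| * `|f`_m| ^+ (m - i)
    < `|f`_j| * `|f`_m| ^+ (m - j) ->
  \sum_(0 <= i < j) `|(toC f)`_i| * ((`|f`_m|%:~R)^-1) ^+ i
    + \sum_(j.+1 <= i < m.+1) `|(toC f)`_i| * ((`|f`_m|%:~R)^-1) ^+ i
    < `|(toC f)`_j| * ((`|f`_m|%:~R)^-1) ^+ j.
Proof.
move=> a0 jm H.
set rho : algC := (`|f`_m|%:~R)^-1.
have r0 : 0 < rho by rewrite invr_gt0 ltr0z normr_gt0.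
rewrite -(ltr_int algC) rmorphD /= !rmorph_sum /= in H.
rewrite -(ltr_pM2r (exprn_gt0 m r0)) mulrDl !mulr_suml in H.
rewrite (term_eq _ _ _ _ a0 (ltnW jm)) in H.
rewrite coef_map /= -intr_norm.
apply: le_lt_trans H; apply: lerD; apply: ler_sum_nat => i /andP[hi1 hi2].
  rewrite term_eq //; last exact: ltnW (leq_trans hi2 (ltnW jm)).
  by rewrite coef_map /= -intr_norm.
rewrite term_eq //.
by rewrite coef_map /= -intr_norm.
Qed.
Lemma lelt (y x z : algC) : x <= y -> y < z -> x < z.
Proof. exact: le_lt_trans. Qed.

Lemma annulus (c : {poly algC}) (rho : algC) (m j : nat) (z : algC) :
  size c = m.+1 -> (j < m.+1)%N -> 0 < rho ->
  \sum_(0 <= i < j) `|c`_i| * rho ^+ i + \sum_(j.+1 <= i < m.+1) `|c`_i| * rho ^+ i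
    < `|c`_j| * rho ^+ j ->
  root c z -> `|z| != rho.
Proof.
move=> sc jm r0 dom rz; apply/negP => /eqP zr.
pose T i := c`_i * z ^+ i.
have E : \sum_(0 <= i < j) T i + T j + \sum_(j.+1 <= i < m.+1) T i = 0.
  rewrite -sum_split // -sc -horner_coef; exact/eqP.
have Tj : T j = - (\sum_(0 <= i < j) T i + \sum_(j.+1 <= i < m.+1) T i).
  by apply/eqP; rewrite -subr_eq0 opprK -[X in _ == X]E; apply/eqP; ring.
have nT : forall i, `|T i| = `|c`_i| * rho ^+ i by move=> i; rewrite normrM normrX zr.
have : `|T j| <= \sum_(0 <= i < j) `|c`_i| * rho ^+ i + \sum_(j.+1 <= i < m.+1) `|c`_i| * rho ^+ i.
  rewrite Tj normrN; apply: le_trans (ler_normD _ _) _.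
  apply: lerD; (apply: le_trans (ler_norm_sum _ _ _) _; apply: ler_sum => i _; rewrite nT //).
rewrite nT => h; move: (le_lt_trans h dom); by rewrite ltxx.
Qed.

Lemma abs1_unit (x : int) : `|x|%N = 1%N -> x \is a GRing.unit.
Proof. case: x => n /= h; first by rewrite h. by case: n h. Qed.

Lemma int_ge1 (x : int) : x != 0 -> 1 <= (`|x|%:~R : algC).
Proof.
move=> x0; rewrite (_ : 1 = (1 : int)%:~R) // ler_int.
by rewrite -gtz0_ge1 normr_gt0.
Qed.

Lemma factor_root (f q h : {poly int}) (m j : nat) :
  f = q * h -> size f = m.+1 -> f`_0 != 0 -> (2 <= size q)%N -> (j < m.+1)%N ->
  let rho := ((`|f`_m|%:~R : algC)^-1) in
  \sum_(0 <= i < j) `|(toC f)`_i| * rho ^+ i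
    + \sum_(j.+1 <= i < m.+1) `|(toC f)`_i| * rho ^+ i
    < `|(toC f)`_j| * rho ^+ j ->
  exists th, root (toC q) th /\ rho < `|th|.
Proof.
move=> ef sf f0 sq jm rho dom.
have fm : f`_m = lead_coef f by rewrite lead_coefE sf.
have q0 : q != 0 by apply: contraTneq sq => ->; rewrite size_poly0.
have h0 : h != 0 by apply: contraNneq f0 => e; rewrite ef e mulr0 coef0.
have fm0 : f`_m != 0 by rewrite fm lead_coef_eq0 ef mulf_neq0.
have A1 : 1 <= (`|f`_m|%:~R : algC) by exact: int_ge1.
have A0 : 0 < (`|f`_m|%:~R : algC) by exact: lt_le_trans ltr01 A1.
have r0 : 0 < rho by rewrite invr_gt0.
have r1 : rho <= 1 by rewrite invr_le1 // unitfE lt0r_neq0.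
have szC : size (toC f) = m.+1 by rewrite size_map_inj_poly ?sf //; exact: intr_inj.
set qC := toC q.
have [r er] := closed_field_poly_normal qC.
have lq0 : lead_coef qC != 0.
  rewrite /qC lead_coef_map_inj ?intr_eq0 ?lead_coef_eq0 //; exact: intr_inj.
have szr : size qC = (size r).+1.
  by rewrite {1}er size_scale // size_prod_XsubC.
have szq : size qC = size q by rewrite size_map_inj_poly //; exact: intr_inj.
case: r er szr => [|z1 r'] er szr; first by move: sq; rewrite -szq szr.
have rootf : forall z, root qC z -> root (toC f) z.
  by move=> z rz; rewrite ef rmorphM rootM rz.
case: (boolP [exists i : 'I_(size (z1 :: r')), rho < `|(z1 :: r')`_i|]).
  case/existsP => i hi; exists (z1 :: r')`_i; split => //.
  rewrite er rootZ // root_prod_XsubC; exact: mem_nth.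
rewrite negb_exists => /forallP hall; exfalso.
have small : forall z, z \in z1 :: r' -> `|z| < rho.
  move=> z zr.
  have rz : root qC z by rewrite er rootZ // root_prod_XsubC.
  have hle : `|z| <= rho.
    have hi : (index z (z1 :: r') < size (z1 :: r'))%N by rewrite index_mem.
    have := hall (Ordinal hi); rewrite /= nth_index //.
    case/orP: (real_leVge (normr_real z) (gtr0_real r0)) => // h1.
    by rewrite lt_neqAle h1 andbT negbK => /eqP ->.
  rewrite lt_neqAle hle andbT.
  exact: annulus szC jm r0 dom (rootf z rz).
have eq0 : (q`_0)%:~R = lead_coef qC * \prod_(z <- z1 :: r') (0 - z).
  rewrite -(coef_map intr) -/qC -horner_coef0 {1}er hornerZ horner_prod.
  by apply: congr2 => //; apply: eq_bigr => z _; rewrite hornerXsubC.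
have qz0 : q`_0 != 0 by apply: contraNneq f0 => e; rewrite ef coef0M e mul0r.
have lqle : `|lead_coef qC| <= `|f`_m|%:~R.
  rewrite lead_coef_map_inj //; last exact: intr_inj.
  rewrite -intr_norm ler_int fm ef lead_coefM normrM ler_peMr //.
  by rewrite -gtz0_ge1 normr_gt0 lead_coef_eq0.
have : 1 < 1 :> algC.
  apply: (lelt _ _ _ (int_ge1 _ qz0)).
  rewrite intr_norm eq0 normrM normr_prod big_cons.
  apply: (lelt _ _ _ (_ : _ <= `|lead_coef qC| * `|0 - z1|)).
    apply: ler_wpM2l; first exact: normr_ge0.
    rewrite -[leRHS]mulr1; apply: ler_wpM2l; first exact: normr_ge0.
    rewrite big_seq; apply: prodr_ile1 => z zr.
    rewrite normr_ge0 /= sub0r normrN; apply: ltW; apply: lt_le_trans r1.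
    by apply: small; rewrite inE zr orbT.
  have hz1 : `|z1| < rho by apply: small; exact: mem_head.
  rewrite sub0r normrN.
  have h1 : `|lead_coef qC| * `|z1| < `|lead_coef qC| * rho.
    by rewrite ltr_pM2l // normr_gt0.
  apply: lt_le_trans h1 _.
  apply: le_trans (ler_wpM2r (ltW r0) lqle) _.
  by rewrite /rho mulfV // lt0r_neq0.
by rewrite ltxx.
Qed.
Lemma nonconst (f q h : {poly int}) : primitive_intpoly f -> f = q * h -> f != 0 ->
  q \isn't a GRing.unit -> (2 <= size q)%N.
Proof.
move=> pr ef f0 /negP qu; rewrite ltnNge; apply/negP => sq.
have eqc := size1_polyC sq.
have qz : q`_0 != 0 by apply: contraNneq f0 => e; rewrite ef eqc e polyC0 mul0r.
have dv : (absz (q`_0)%R %| 1)%N.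
  move: pr; rewrite /primitive_intpoly => /eqP pr; rewrite -pr.
  have cf : forall k, f`_k = q`_0 * h`_k by move=> k; rewrite ef {1}eqc coefCM.
  apply/dvdn_biggcdP => i _; rewrite cf abszM dvdn_mulr //.
move: dv; rewrite dvdn1 => /eqP a1.
apply: qu; rewrite poly_unitE eqc size_polyC qz /= coefC /=; exact: abs1_unit.
Qed.

Lemma roots_list (s : seq {poly int}) (rho : algC) :
  (forall q, q \in s -> exists th, root (toC q) th /\ rho < `|th|) ->
  exists t : seq algC, [/\ size t = size s, (forall z, z \in t -> rho < `|z|) &
    \prod_(z <- t) ('X - z%:P) %| toC (\prod_(q <- s) q)].
Proof.
elim: s => [|q s IH] hs.
  by exists [::]; split => //; rewrite !big_nil rmorph1 dvdpp.
have [t [st ht dt]] : exists t : seq algC, [/\ size t = size s, (forall z, z \in t -> rho < `|z|) &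
    \prod_(z <- t) ('X - z%:P) %| toC (\prod_(q <- s) q)].
  by apply: IH => p ps; apply: hs; rewrite inE ps orbT.
have [th [rt hth]] := hs q (mem_head _ _).
exists (th :: t); split; first by rewrite /= st.
  by move=> z; rewrite inE => /orP[/eqP ->|]; [exact: hth | exact: ht].
rewrite !big_cons rmorphM; apply: dvdp_mul => //.
by rewrite -root_factor_theorem.
Qed.

Lemma divides_of (f u : {poly int}) (s : seq {poly int}) q :
  f = u * \prod_(p <- s) p -> q \in s -> exists h, f = q * h.
Proof.
move=> ef qs; exists (u * \prod_(p <- rem q s) p).
by rewrite ef (big_rem q) //= mulrCA.
Qed.

Lemma size_bound (f u : {poly int}) (s : seq {poly int}) (m j : nat) :
  size f = m.+1 -> f`_0 != 0 -> primitive_intpoly f ->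
  f = u * \prod_(p <- s) p -> (forall q, q \in s -> q \isn't a GRing.unit) -> (j < m.+1)%N ->
  \sum_(0 <= i < j) `|(toC f)`_i| * ((`|f`_m|%:~R)^-1) ^+ i
    + \sum_(j.+1 <= i < m.+1) `|(toC f)`_i| * ((`|f`_m|%:~R)^-1) ^+ i
    < `|(toC f)`_j| * ((`|f`_m|%:~R)^-1) ^+ j ->
  (size s <= m - j)%N.
Proof.
move=> sf f0 pr ef nu jm dom.
have fn0 : f != 0 by rewrite -size_poly_gt0 sf.
have fm0 : f`_m != 0.
  by move: fn0; rewrite -lead_coef_eq0 lead_coefE sf.
have r0 : 0 < ((`|f`_m|%:~R : algC)^-1) by rewrite invr_gt0 ltr0z normr_gt0.
have [t [st ht dt]] := roots_list s ((`|f`_m|%:~R : algC)^-1) (fun q qs =>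
  let: ex_intro h eh := divides_of f u s q ef qs in
  factor_root f q h m j eh sf f0 (nonconst f q h pr eh fn0 (nu q qs)) jm dom).
rewrite -st; apply: (key (toC f) _ m j t r0) => //.
- by rewrite size_map_inj_poly ?sf //; exact: intr_inj.
- by rewrite map_poly_eq0_id0 ?intr_eq0 ?lead_coef_eq0.
- by apply: dvdp_trans dt _; rewrite ef rmorphM dvdp_mull.
Qed.
Lemma ar6 (a b : nat) : (a - b <= 0)%N -> (b.+1 <= a)%N -> False.
Proof. lia. Qed.
Lemma ar4 (j m : nat) : (2 <= m)%N -> (j <= m - 1)%N -> (j < m)%N.
Proof. lia. Qed.
Lemma ar5 (n a b : nat) : (a - b <= n.+1)%N -> (b.+1 <= a)%N -> (a - b.+1 <= n)%N.
Proof. lia. Qed.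

Theorem theorem4 (R : realType) (f : {poly int}) (b : nat) (delta : R) (j : nat) :
  let m := (size f).-1 in
  (2 <= m)%N ->
  primitive_intpoly f ->
  f`_0 * f`_m != 0 ->
  (0 < b)%N -> (b%:Z %| f`_m)%Z ->
  1 / b%:R <= delta <= 1 ->
  (j <= m - 1)%N ->
  (\sum_(0 <= i < j) (`|f`_i| * `|f`_m| ^+ (j - i))%:~R
     + \sum_(j.+1 <= i < m.+1) (`|f`_i|)%:~R * delta ^+ (i - j) < (`|f`_j|)%:~R :> R) ->
  prod_at_most_irr (m - j) f.
Proof.
move=> m hm pr h0m b0 bd /andP[hd _] hj H.
have f0 : f`_0 != 0 by move: h0m; rewrite mulf_eq0 negb_or => /andP[].
have am0 : f`_m != 0 by move: h0m; rewrite mulf_eq0 negb_or => /andP[].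
have fn0 : f != 0 by apply: contraNneq f0 => ->; rewrite coef0.
have sf : size f = m.+1 by rewrite /m prednK // size_poly_gt0.
have jm : (j < m)%N by exact: ar4 hm hj.
have ID := int_dom R f b delta j m am0 b0 bd hd jm H.
have AD := alg_dom f j m am0 jm ID.
have jm1 : (j < m.+1)%N by apply: ltnW.
have SB := fun u s ef nu => size_bound f u s m j sf f0 pr ef nu jm1 AD.
suff main : forall n (u : {poly int}) (s : seq {poly int}),
    ((m - j) - size s <= n)%N -> u \is a GRing.unit -> f = u * \prod_(p <- s) p ->
    (forall q, q \in s -> q \isn't a GRing.unit) -> prod_at_most_irr (m - j) f.
  apply: (main (m - j)%N 1 [:: f]) => //; first exact: leq_subr.
  - by rewrite unitr1.
  - by rewrite big_seq1 mul1r.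
  - move=> q; rewrite inE => /eqP ->; rewrite poly_unitE sf /=.
    by apply/negP => /andP[e _]; move: e; rewrite eqSS => /eqP e0; move: hm; rewrite e0.
elim=> [|n IH] u s hn hu ef nu.
all: case: (classic (forall q, q \in s -> irreducible_elt q)) => [Hall|Hn];
  first by exists u, s; split => //; apply: SB ef nu.
all: have [q Hq] := not_all_ex_not _ _ Hn.
all: have [qs nirr] := imply_to_and _ _ Hq.
all: have [h eh] := divides_of f u s q ef qs.
all: have q0 : q != 0 by apply: contraNneq fn0 => e; rewrite eh e mul0r.
all: have [a Ha] : exists a, ~ forall b0, q = a * b0 -> a \is a GRing.unit \/ b0 \is a GRing.unit.
all: try (apply: not_all_ex_not => Hf; apply: nirr; split => //; split => //; exact: nu).
all: have [c Hc] := not_all_ex_not _ _ Ha.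
all: have [eqc Hnc] := imply_to_and _ _ Hc.
all: have [au cu] := not_or_and _ _ Hnc.
all: pose s' := [:: a, c & rem q s].
all: have ef' : f = u * \prod_(p <- s') p
      by rewrite ef (big_rem q) //= !big_cons eqc !mulrA.
all: have nu' : forall p, p \in s' -> p \isn't a GRing.unit
      by move=> p; rewrite !inE => /orP[/eqP ->|/orP[/eqP ->|/mem_rem /nu //]];
         apply/negP.
all: have ss' : size s' = (size s).+1 by rewrite /= size_rem // prednK // lt0n size_eq0; apply: contraTneq qs => ->.
all: have hb := SB u s' ef' nu'.
- by exfalso; apply: (ar6 (m - j) (size s) hn); rewrite -ss'.
- apply: (IH u s') => //; rewrite ss'; apply: ar5 hn _; rewrite -ss'; exact: hb.
Qed.
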